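(* Let $A\in\mathbb R^{m\times N}$, let $\mathcal B=(\mathcal B_1,\dots,\mathcal B_B)$ be a block structure with weights $\omega=(\omega_1,\dots,\omega_B)$, $\omega_i\ge1$. Let $s\ge2\|\omega\|_\infty^2$ and assume $A$ satisfies the WBRIP of order $2s$ with constant $\delta_{2s}<\frac{1}{2\sqrt2+1}$. For $x\in\mathbb R^N$ let $y=Ax+e$ with $\|e\|_2\le\eta$, and let $$\hat x\in\arg\min_{z\in\mathbb R^N}\|z\|_{2,1}^{(\omega)}\quad\text{s.t. }\|Az-y\|_2\le\eta.$$ Then $$\|x-\hat x\|_{2,1}^{(\omega)}\le c_\delta\,\sigma_s(x)_{2,1}^{(\omega)}+d_\delta\sqrt s\,\eta,\qquad \|x-\hat x\|_2\le\frac{c_\delta}{\sqrt s}\sigma_s(x)_{2,1}^{(\omega)}+d_\delta\eta,$$ where $c_\delta=\frac{2(1+\delta_{2s}(2\sqrt2-3))^2}{(1-\delta_{2s})(1-\delta_{2s}(2\sqrt2+1))}$ and $d_\delta=\frac{2(3+\delta_{2s}(2\sqrt2-3))\sqrt{1+\delta_{2s}}}{(1-\delta_{2s})(1-\delta_{2s}(2\sqrt2+1))}$.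
   Context: Block structure: $\mathcal B=(\mathcal B_1,\dots,\mathcal B_B)$ partition of $\{1,\dots,N\}$; $x[b]=x[\mathcal B_b]$. Weights $\omega_b\ge1$, $\|\omega\|_\infty=\max_b\omega_b$, $\omega(S)=\sum_{b\in S}\omega_b^2$. $\|x\|_{2,p}^{(\omega)}=\big(\sum_b\omega_b^{2-p}\|x[b]\|_2^p\big)^{1/p}$. $\|x\|_0^{(\omega)}=\omega(\{b:x[b]\ne0\})$. $\sigma_s(x)_{2,1}^{(\omega)}=\inf\{\|x-z\|_{2,1}^{(\omega)}:\|z\|_0^{(\omega)}\le s\}$. Definition (WBRIP): $A$ satisfies the weighted block restricted isometry property of order $t\ge\|\omega\|_\infty$ with constant $\delta\in(0,1)$ if $(1-\delta)\|x\|_2^2\le\|Ax\|_2^2\le(1+\delta)\|x\|_2^2$ for all $x$ with $\|x\|_0^{(\omega)}\le t$; the smallest such $\delta$ is denoted $\delta_t$. *)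

(* Defs.v *)
From Stdlib Require Import Reals Lra Classical ClassicalEpsilon.
Open Scope R_scope.

(* Vectors in R^n are functions nat -> R; only indices 0..n-1 matter. *)

Fixpoint fsum (n : nat) (f : nat -> R) : R :=
  match n with
  | O => 0
  | S k => fsum k f + f k
  end.

Definition norm2 (N : nat) (x : nat -> R) : R := sqrt (fsum N (fun j => x j ^ 2)).

Definition matvec (N : nat) (A : nat -> nat -> R) (x : nat -> R) : nat -> R :=
  fun i => fsum N (fun j => A i j * x j).

Definition vsub (x z : nat -> R) : nat -> R := fun j => x j - z j.
Definition vadd (x z : nat -> R) : nat -> R := fun j => x j + z j.

(* Block structure: blk j = index of the block containing coordinate j.
   It is a partition of {0..N-1} into B nonempty blocks B_0..B_{B-1}. *)
Definition is_block_structure (N B : nat) (blk : nat -> nat) : Prop :=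
  (forall j, (j < N)%nat -> (blk j < B)%nat) /\
  (forall b, (b < B)%nat -> exists j, (j < N)%nat /\ blk j = b).

Definition blocknorm (N : nat) (blk : nat -> nat) (x : nat -> R) (b : nat) : R :=
  sqrt (fsum N (fun j => if Nat.eq_dec (blk j) b then x j ^ 2 else 0)).

Definition w21norm (N B : nat) (blk : nat -> nat) (w : nat -> R) (x : nat -> R) : R :=
  fsum B (fun b => w b * blocknorm N blk x b).

Definition block_nonzero (N : nat) (blk : nat -> nat) (x : nat -> R) (b : nat) : Prop :=
  exists j, (j < N)%nat /\ blk j = b /\ x j <> 0.

Definition wsetweight (B : nat) (w : nat -> R) (S : nat -> Prop) : R :=
  fsum B (fun b => if excluded_middle_informative (S b) then w b ^ 2 else 0).

Definition w0norm (N B : nat) (blk : nat -> nat) (w : nat -> R) (x : nat -> R) : R :=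
  wsetweight B w (block_nonzero N blk x).

Fixpoint wmax (B : nat) (w : nat -> R) : R :=
  match B with
  | O => 0
  | S k => Rmax (wmax k w) (w k)
  end.

Definition is_glb (E : R -> Prop) (m : R) : Prop :=
  (forall x, E x -> m <= x) /\ (forall m', (forall x, E x -> m' <= x) -> m' <= m).

Definition Rinf (E : R -> Prop) : R := epsilon (inhabits 0) (is_glb E).

Definition sigma_s (N B : nat) (blk : nat -> nat) (w : nat -> R) (s : R) (x : nat -> R) : R :=
  Rinf (fun r => exists z, w0norm N B blk w z <= s /\ r = w21norm N B blk w (vsub x z)).

Definition WBRIP (N B : nat) (blk : nat -> nat) (w : nat -> R) (m : nat)
    (A : nat -> nat -> R) (t delta : R) : Prop :=
  t >= wmax B w /\ 0 < delta < 1 /\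
  forall x, w0norm N B blk w x <= t ->
    (1 - delta) * norm2 N x ^ 2 <= norm2 m (matvec N A x) ^ 2 /\
    norm2 m (matvec N A x) ^ 2 <= (1 + delta) * norm2 N x ^ 2.

Definition delta_t (N B : nat) (blk : nat -> nat) (w : nat -> R) (m : nat)
    (A : nat -> nat -> R) (t : R) : R :=
  Rinf (fun d => WBRIP N B blk w m A t d).

(* Main.v *)
Require Import Defs.
From Stdlib Require Import Reals Lra Psatz Lia List Permutation Sorted FunctionalExtensionality Classical ClassicalEpsilon.
Open Scope R_scope.

Lemma fsum_ext n f g : (forall i, (i < n)%nat -> f i = g i) -> fsum n f = fsum n g.
Proof. induction n; simpl; intros H; auto. rewrite IHn by (intros; apply H; lia). rewrite H by lia. auto. Qed.

Lemma fsum_plus n f g : fsum n (fun i => f i + g i) = fsum n f + fsum n g.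
Proof. induction n; simpl; [lra| rewrite IHn; lra]. Qed.

Lemma fsum_scal n c f : fsum n (fun i => c * f i) = c * fsum n f.
Proof. induction n; simpl; [lra| rewrite IHn; lra]. Qed.

Lemma fsum_lin n a b f g : fsum n (fun i => a * f i + b * g i) = a * fsum n f + b * fsum n g.
Proof. induction n; simpl; [lra| rewrite IHn; lra]. Qed.

Lemma fsum_le n f g : (forall i, (i<n)%nat -> f i <= g i) -> fsum n f <= fsum n g.
Proof. induction n; simpl; intros H; [lra|]. assert (f n <= g n) by (apply H; lia).
  assert (fsum n f <= fsum n g) by (apply IHn; intros; apply H; lia). lra. Qed.

Lemma fsum_zero n : fsum n (fun _ => 0) = 0.
Proof. induction n; simpl; [lra| rewrite IHn; lra]. Qed.

Lemma fsum_nonneg n f : (forall i, (i<n)%nat -> 0 <= f i) -> 0 <= fsum n f.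
Proof. intros H. rewrite <- (fsum_zero n). apply fsum_le. auto. Qed.

Lemma fsum_opp n f : fsum n (fun i => - f i) = - fsum n f.
Proof. induction n; simpl; [lra| rewrite IHn; lra]. Qed.

Lemma fsum_swap n k F : fsum n (fun i => fsum k (fun j => F i j)) = fsum k (fun j => fsum n (fun i => F i j)).
Proof. induction n; simpl.
- symmetry. apply fsum_zero.
- rewrite IHn. rewrite <- fsum_plus. reflexivity. Qed.

Lemma fsum_single n c g : fsum n (fun b => if Nat.eq_dec c b then g b else 0) = if Nat.ltb c n then g c else 0.
Proof. induction n; simpl; auto. rewrite IHn.
  destruct (Nat.eq_dec c n); destruct (Nat.ltb_spec c n); destruct (Nat.ltb_spec c (S n)); subst; try lia; lra.
Qed.

Lemma pow_le_sq x y : 0 <= x -> 0 <= y -> x^2 <= y^2 -> x <= y.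
Proof. intros. nra. Qed.

Lemma aux_lt k X : 0 <= k -> 0 < X -> k*X/(2*(k+1)) < X.
Proof. intros. assert (H1: k*X/(2*(k+1)) = X - X*(k+2)/(2*(k+1))) by (field; lra).
  assert (0 < X*(k+2)/(2*(k+1))) by (apply Rdiv_lt_0_compat; nra). lra. Qed.

Lemma amgm X a b c : 0 <= a -> 0 <= b -> 0 <= c ->
  (forall T, 0 < T -> X <= c * (T * a^2 + b^2 / T) / 2) -> X <= c * a * b.
Proof. intros Ha Hb Hc H.
  destruct (Rle_lt_dec X 0) as [HX|HX]. { assert (0 <= c*a*b) by (apply Rmult_le_pos; [apply Rmult_le_pos|]; lra). lra. }
  destruct (Req_dec a 0) as [Ea|Ea].
  - subst. exfalso. set (T := (c*b^2+1)/X).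
    assert (HT: 0 < T) by (unfold T; apply Rdiv_lt_0_compat; nra).
    specialize (H T HT). unfold T in H.
    assert (c*(((c*b^2+1)/X)*0^2 + b^2/((c*b^2+1)/X))/2 = c*b^2*X/(2*(c*b^2+1))) by (field; nra).
    rewrite H0 in H. assert (c*b^2*X/(2*(c*b^2+1)) < X).
    { apply aux_lt; nra. }
    lra.
  - destruct (Req_dec b 0) as [Eb|Eb].
    + subst. exfalso. set (T := X/(c*a^2+1)).
      assert (HT: 0 < T) by (unfold T; apply Rdiv_lt_0_compat; nra).
      specialize (H T HT). unfold T in H.
      assert (c*((X/(c*a^2+1))*a^2 + 0^2/(X/(c*a^2+1)))/2 = c*a^2*X/(2*(c*a^2+1))) by (field; nra).
      rewrite H0 in H. assert (c*a^2*X/(2*(c*a^2+1)) < X).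
      { apply aux_lt; nra. }
      lra.
    + assert (HT: 0 < b/a) by (apply Rdiv_lt_0_compat; lra).
      specialize (H _ HT). replace (c * (b / a * a ^ 2 + b ^ 2 / (b / a)) / 2) with (c*a*b) in H by (field; lra). lra.
Qed.

Definition dot n (p q : nat -> R) := fsum n (fun i => p i * q i).

Lemma norm2_nonneg n p : 0 <= norm2 n p.
Proof. apply sqrt_pos. Qed.

Lemma norm2_sq n p : norm2 n p ^ 2 = dot n p p.
Proof. unfold norm2, dot. rewrite pow2_sqrt. apply fsum_ext; intros; ring.
  apply fsum_nonneg; intros; apply pow2_ge_0. Qed.

Lemma norm2_ext n p q : (forall i, (i<n)%nat -> p i = q i) -> norm2 n p = norm2 n q.
Proof. intros H. unfold norm2. f_equal. apply fsum_ext. intros. rewrite H; auto. Qed.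

Lemma norm2_le n p a : 0 <= a -> dot n p p <= a^2 -> norm2 n p <= a.
Proof. intros. apply pow_le_sq; auto. apply norm2_nonneg. rewrite norm2_sq. auto. Qed.

Lemma CS n p q : dot n p q <= norm2 n p * norm2 n q.
Proof. replace (norm2 n p * norm2 n q) with (1 * norm2 n p * norm2 n q) by ring.
  apply amgm; try apply norm2_nonneg; try lra. intros T HT.
  rewrite !norm2_sq. unfold dot.
  replace (1 * (T * fsum n (fun i => p i * p i) + fsum n (fun i => q i * q i) / T) / 2)
    with (fsum n (fun i => (T * (p i * p i) + (q i * q i)/T)/2)).
  2: { rewrite (fsum_ext n _ (fun i => (T/2)*(p i*p i) + (/(2*T))*(q i*q i))) by (intros; field; lra).
       rewrite fsum_lin. field. lra. }
  apply fsum_le. intros i _.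
  assert (0 <= (T*p i - q i)^2 / T) by (apply Rmult_le_pos; [apply pow2_ge_0|left; apply Rinv_0_lt_compat; lra]).
  replace ((T*p i - q i)^2 / T) with (T*(p i*p i) + q i*q i/T - 2*(p i*q i)) in H by (field; lra).
  lra.
Qed.

Definition vscale (c : R) (u : nat -> R) : nat -> R := fun j => c * u j.

Lemma dot_scal_r n p q c : dot n p (vscale c q) = c * dot n p q.
Proof. unfold dot, vscale. rewrite <- fsum_scal. apply fsum_ext; intros; ring. Qed.

Lemma norm2_opp n p : norm2 n (vscale (-1) p) = norm2 n p.
Proof. unfold norm2, vscale. f_equal. apply fsum_ext. intros; ring. Qed.

Lemma CS_abs n p q : Rabs (dot n p q) <= norm2 n p * norm2 n q.
Proof. apply Rabs_le. split.
  - assert (H := CS n p (vscale (-1) q)). rewrite dot_scal_r, norm2_opp in H. lra.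
  - apply CS. Qed.

Lemma dot_sym n p q : dot n p q = dot n q p.
Proof. unfold dot. apply fsum_ext; intros; ring. Qed.

Lemma dot_add_r n p q1 q2 : dot n p (vadd q1 q2) = dot n p q1 + dot n p q2.
Proof. unfold dot, vadd. rewrite <- fsum_plus. apply fsum_ext; intros; ring. Qed.

Lemma dot_sub_r n p q1 q2 : dot n p (vsub q1 q2) = dot n p q1 - dot n p q2.
Proof. unfold dot, vsub. unfold Rminus. rewrite <- fsum_opp, <- fsum_plus. apply fsum_ext; intros; ring. Qed.

Lemma dot_ext n p q p' q' : (forall i, (i<n)%nat -> p i = p' i) -> (forall i, (i<n)%nat -> q i = q' i) -> dot n p q = dot n p' q'.
Proof. intros. unfold dot. apply fsum_ext. intros. rewrite H, H0; auto. Qed.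

Lemma mink n p q : norm2 n (vadd p q) <= norm2 n p + norm2 n q.
Proof. apply norm2_le. { assert (H1:= norm2_nonneg n p). assert (H2:= norm2_nonneg n q). lra. }
  replace (dot n (vadd p q) (vadd p q)) with (dot n p p + 2 * dot n p q + dot n q q).
  2: { unfold dot, vadd. rewrite <- fsum_scal, <- !fsum_plus. apply fsum_ext; intros; ring. }
  rewrite <- !norm2_sq. assert (H := CS n p q). nra. Qed.

Lemma mink_sub n p q : norm2 n (vsub p q) <= norm2 n p + norm2 n q.
Proof. replace (vsub p q) with (vadd p (vscale (-1) q)).
  rewrite <- (norm2_opp n q). apply mink. apply functional_extensionality; intros; unfold vsub, vadd, vscale; ring. Qed.

Lemma matvec_add N A u v : matvec N A (vadd u v) = vadd (matvec N A u) (matvec N A v).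
Proof. apply functional_extensionality; intros i. unfold matvec, vadd. rewrite <- fsum_plus. apply fsum_ext; intros; ring. Qed.
Lemma matvec_sub N A u v : matvec N A (vsub u v) = vsub (matvec N A u) (matvec N A v).
Proof. apply functional_extensionality; intros i. unfold matvec, vsub. unfold Rminus. rewrite <- fsum_opp, <- fsum_plus. apply fsum_ext; intros; ring. Qed.
Lemma matvec_scal N A c u : matvec N A (vscale c u) = vscale c (matvec N A u).
Proof. apply functional_extensionality; intros i. unfold matvec, vscale. rewrite <- fsum_scal. apply fsum_ext; intros; ring. Qed.
Lemma matvec_ext N A u v : (forall j, (j<N)%nat -> u j = v j) -> matvec N A u = matvec N A v.
Proof. intros H. apply functional_extensionality; intros i. unfold matvec. apply fsum_ext; intros. rewrite H; auto. Qed.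
Section Blocks.
Variables (N B : nat) (blk : nat -> nat) (w : nat -> R).
Hypothesis Hblk : forall j, (j < N)%nat -> (blk j < B)%nat.
Hypothesis Hw : forall b, (b < B)%nat -> 1 <= w b.

Definition restr (P : nat -> bool) (u : nat -> R) : nat -> R := fun j => if P (blk j) then u j else 0.
Definition Wt (P : nat -> bool) := fsum B (fun b => if P b then w b ^ 2 else 0).
Definition L1 (P : nat -> bool) u := fsum B (fun b => if P b then w b * blocknorm N blk u b else 0).
Definition Qs (P : nat -> bool) u := fsum B (fun b => if P b then blocknorm N blk u b ^ 2 else 0).

Lemma bn_nonneg u b : 0 <= blocknorm N blk u b.
Proof. apply sqrt_pos. Qed.

Lemma bn_sq u b : blocknorm N blk u b ^ 2 = fsum N (fun j => if Nat.eq_dec (blk j) b then u j ^ 2 else 0).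
Proof. unfold blocknorm. rewrite pow2_sqrt; auto. apply fsum_nonneg. intros. destruct (Nat.eq_dec (blk i) b); [apply pow2_ge_0|lra]. Qed.

Lemma bn_ext u v b : (forall j, (j<N)%nat -> u j = v j) -> blocknorm N blk u b = blocknorm N blk v b.
Proof. intros H. unfold blocknorm. f_equal. apply fsum_ext. intros. rewrite H; auto. Qed.

Lemma bn_restr P u b : blocknorm N blk (restr P u) b = if P b then blocknorm N blk u b else 0.
Proof. unfold blocknorm, restr. destruct (P b) eqn:E.
  - f_equal. apply fsum_ext. intros. destruct (Nat.eq_dec (blk i) b); auto. subst. rewrite E. auto.
  - rewrite (fsum_ext N _ (fun _ => 0)). rewrite fsum_zero. apply sqrt_0.
    intros. destruct (Nat.eq_dec (blk i) b); auto. subst. rewrite E. ring. Qed.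

Lemma norm2_blocks u : norm2 N u ^ 2 = fsum B (fun b => blocknorm N blk u b ^ 2).
Proof. unfold norm2. rewrite pow2_sqrt by (apply fsum_nonneg; intros; apply pow2_ge_0).
  rewrite (fsum_ext B _ (fun b => fsum N (fun j => if Nat.eq_dec (blk j) b then u j ^ 2 else 0))) by (intros; apply bn_sq).
  rewrite <- fsum_swap. apply fsum_ext. intros j Hj.
  rewrite (fsum_single B (blk j) (fun _ => u j ^ 2)). destruct (Nat.ltb_spec (blk j) B); auto.
  specialize (Hblk j Hj). lia. Qed.

Lemma norm2_restr_sq P u : norm2 N (restr P u) ^ 2 = Qs P u.
Proof. rewrite norm2_blocks. unfold Qs. apply fsum_ext. intros. rewrite bn_restr. destruct (P i); auto. ring. Qed.

Lemma w21_restr P u : w21norm N B blk w (restr P u) = L1 P u.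
Proof. unfold w21norm, L1. apply fsum_ext. intros. rewrite bn_restr. destruct (P i); auto. ring. Qed.

Lemma w21_L1 u : w21norm N B blk w u = L1 (fun _ => true) u.
Proof. reflexivity. Qed.

Lemma fsum_pred_split (f : nat -> R) (P P1 P2 : nat -> bool) :
  (forall b, (b < B)%nat -> P b = orb (P1 b) (P2 b)) -> (forall b, (b < B)%nat -> andb (P1 b) (P2 b) = false) ->
  fsum B (fun b => if P b then f b else 0) = fsum B (fun b => if P1 b then f b else 0) + fsum B (fun b => if P2 b then f b else 0).
Proof. intros H1 H2. rewrite <- fsum_plus. apply fsum_ext. intros b Hb. rewrite H1 by auto. specialize (H2 b Hb).
  destruct (P1 b), (P2 b); simpl in *; try discriminate; try ring. Qed.

Lemma fsum_pred_le (f : nat -> R) (P P' : nat -> bool) :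
  (forall b, (b<B)%nat -> 0 <= f b) -> (forall b, (b < B)%nat -> P b = true -> P' b = true) ->
  fsum B (fun b => if P b then f b else 0) <= fsum B (fun b => if P' b then f b else 0).
Proof. intros H1 H2. apply fsum_le. intros b Hb. specialize (H1 b Hb). specialize (H2 b Hb).
  destruct (P b), (P' b); try lra; discriminate (H2 eq_refl). Qed.

Lemma fsum_pred_nonneg (f : nat -> R) (P : nat -> bool) :
  (forall b, (b<B)%nat -> 0 <= f b) -> 0 <= fsum B (fun b => if P b then f b else 0).
Proof. intros H. apply fsum_nonneg. intros. destruct (P i); auto. lra. Qed.

Lemma L1_nonneg P u : 0 <= L1 P u.
Proof. apply fsum_pred_nonneg. intros. assert (H1 := Hw b H). assert (H2 := bn_nonneg u b). nra. Qed.
Lemma Qs_nonneg P u : 0 <= Qs P u.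
Proof. apply fsum_pred_nonneg. intros. apply pow2_ge_0. Qed.
Lemma Wt_nonneg P : 0 <= Wt P.
Proof. apply fsum_pred_nonneg. intros. apply pow2_ge_0. Qed.

Lemma L1_split P u : w21norm N B blk w u = L1 P u + L1 (fun b => negb (P b)) u.
Proof. unfold L1, w21norm. apply (fsum_pred_split (fun b => w b * blocknorm N blk u b) (fun _ => true) P (fun b => negb (P b))); intros; destruct (P b); auto. Qed.

Lemma L1_le_all P u : L1 P u <= w21norm N B blk w u.
Proof. rewrite (L1_split P u). assert (H := L1_nonneg (fun b => negb (P b)) u). lra. Qed.

Lemma w0norm_restr P u : w0norm N B blk w (restr P u) <= Wt P.
Proof. unfold w0norm, wsetweight, Wt. apply fsum_le. intros b Hb.
  destruct (excluded_middle_informative (block_nonzero N blk (restr P u) b)) as [H|H].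
  - destruct H as [j [Hj [Hb' Hu]]]. unfold restr in Hu. subst. destruct (P (blk j)); [lra| congruence].
  - destruct (P b); [apply pow2_ge_0| lra]. Qed.

Lemma w0norm_add u v : w0norm N B blk w (vadd u v) <= w0norm N B blk w u + w0norm N B blk w v.
Proof. unfold w0norm, wsetweight. rewrite <- fsum_plus. apply fsum_le. intros b Hb.
  assert (Hp := pow2_ge_0 (w b)).
  destruct (excluded_middle_informative (block_nonzero N blk (vadd u v) b)) as [H|H].
  - destruct (excluded_middle_informative (block_nonzero N blk u b)) as [H1|H1];
    destruct (excluded_middle_informative (block_nonzero N blk v b)) as [H2|H2]; try lra.
    exfalso. destruct H as [j [Hj [Hb' Hu]]]. unfold vadd in Hu.
    destruct (Req_dec (u j) 0). 2: { apply H1. exists j; auto. }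
    destruct (Req_dec (v j) 0). 2: { apply H2. exists j; auto. } lra.
  - destruct (excluded_middle_informative (block_nonzero N blk u b));
    destruct (excluded_middle_informative (block_nonzero N blk v b)); lra. Qed.

Lemma w0norm_scal c u : w0norm N B blk w (vscale c u) <= w0norm N B blk w u.
Proof. unfold w0norm, wsetweight. apply fsum_le. intros b Hb.
  assert (Hp := pow2_ge_0 (w b)).
  destruct (excluded_middle_informative (block_nonzero N blk (vscale c u) b)) as [H|H];
  destruct (excluded_middle_informative (block_nonzero N blk u b)) as [H1|H1]; try lra.
  exfalso. destruct H as [j [Hj [Hb' Hu]]]. apply H1. exists j. unfold vscale in Hu. split; auto. split; auto.
  intro. apply Hu. rewrite H. ring. Qed.

Lemma L1_CS P u : L1 P u <= sqrt (Wt P) * sqrt (Qs P u).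
Proof. assert (H := CS B (fun b => if P b then w b else 0) (fun b => if P b then blocknorm N blk u b else 0)).
  unfold dot, norm2 in H. unfold L1, Wt, Qs.
  replace (fsum B (fun b => if P b then w b * blocknorm N blk u b else 0)) with
    (fsum B (fun i => (if P i then w i else 0) * (if P i then blocknorm N blk u i else 0))).
  2: { apply fsum_ext. intros. destruct (P i); ring. }
  replace (fsum B (fun b => if P b then w b ^ 2 else 0)) with (fsum B (fun j => (if P j then w j else 0) ^ 2)).
  2: { apply fsum_ext. intros. destruct (P i); ring. }
  replace (fsum B (fun b => if P b then blocknorm N blk u b ^ 2 else 0)) with (fsum B (fun j => (if P j then blocknorm N blk u j else 0) ^ 2)).
  2: { apply fsum_ext. intros. destruct (P i); ring. }
  exact H. Qed.

Lemma Qs_le_M P u M : (forall b, (b<B)%nat -> P b = true -> blocknorm N blk u b <= M * w b) -> Qs P u <= M * L1 P u.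
Proof. intros H. unfold Qs, L1. rewrite <- fsum_scal. apply fsum_le. intros b Hb. specialize (H b Hb).
  destruct (P b). 2: lra. specialize (H eq_refl). assert (H1 := bn_nonneg u b). assert (H2 := Hw b Hb). nra. Qed.

Lemma Wt_le_L1 P u m : (forall b, (b<B)%nat -> P b = true -> m * w b <= blocknorm N blk u b) -> m * Wt P <= L1 P u.
Proof. intros H. unfold Wt, L1. rewrite <- fsum_scal. apply fsum_le. intros b Hb. specialize (H b Hb).
  destruct (P b). 2: lra. specialize (H eq_refl). assert (H2 := Hw b Hb). nra. Qed.

Lemma w0norm_zero : w0norm N B blk w (fun _ => 0) = 0.
Proof. unfold w0norm, wsetweight. rewrite (fsum_ext B _ (fun _ => 0)). apply fsum_zero.
  intros. destruct (excluded_middle_informative (block_nonzero N blk (fun _ => 0) i)) as [[j [_ [_ H1]]]|]; auto. lra. Qed.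

Lemma w21_nonneg u : 0 <= w21norm N B blk w u.
Proof. rewrite w21_L1. apply L1_nonneg. Qed.

End Blocks.
Lemma polar m a b T : dot m (vadd (vscale T a) b) (vadd (vscale T a) b) - dot m (vadd (vscale T a) (vscale (-1) b)) (vadd (vscale T a) (vscale (-1) b)) = 4*T*dot m a b.
Proof. unfold dot, vadd, vscale. unfold Rminus. rewrite <- fsum_opp, <- fsum_plus, <- fsum_scal. apply fsum_ext. intros; ring. Qed.

Section RIP.
Variables (N B : nat) (blk : nat -> nat) (w : nat -> R) (m : nat) (A : nat -> nat -> R) (s delta : R).
Hypothesis Hd : 0 <= delta.
Hypothesis HRIP : forall u, w0norm N B blk w u <= 2 * s ->
    (1 - delta) * norm2 N u ^ 2 <= norm2 m (matvec N A u) ^ 2 /\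
    norm2 m (matvec N A u) ^ 2 <= (1 + delta) * norm2 N u ^ 2.

Lemma rip_upper u v : w0norm N B blk w u <= s -> w0norm N B blk w v <= s -> (forall j, (j<N)%nat -> u j * v j = 0) ->
  dot m (matvec N A u) (matvec N A v) <= delta * norm2 N u * norm2 N v.
Proof. intros Hu Hv Huv. apply amgm; try apply norm2_nonneg; auto. intros T HT.
  set (p := vadd (vscale T u) v). set (q := vadd (vscale T u) (vscale (-1) v)).
  assert (Hp: w0norm N B blk w p <= 2*s).
  { unfold p. eapply Rle_trans. apply w0norm_add. assert (H:= w0norm_scal N B blk w T u). lra. }
  assert (Hq: w0norm N B blk w q <= 2*s).
  { unfold q. eapply Rle_trans. apply w0norm_add. assert (H:= w0norm_scal N B blk w T u).
    assert (H2:= w0norm_scal N B blk w (-1) v). lra. }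
  assert (Ep: norm2 N p ^ 2 = T^2 * norm2 N u ^ 2 + norm2 N v ^ 2).
  { rewrite !norm2_sq. unfold dot, p, vadd, vscale. rewrite <- fsum_scal, <- fsum_plus. apply fsum_ext. intros j Hj.
    specialize (Huv j Hj). nra. }
  assert (Eq: norm2 N q ^ 2 = T^2 * norm2 N u ^ 2 + norm2 N v ^ 2).
  { rewrite !norm2_sq. unfold dot, q, vadd, vscale. rewrite <- fsum_scal, <- fsum_plus. apply fsum_ext. intros j Hj.
    specialize (Huv j Hj). nra. }
  destruct (HRIP p Hp) as [_ H1]. destruct (HRIP q Hq) as [H2 _].
  rewrite Ep in H1. rewrite Eq in H2.
  assert (Ap: norm2 m (matvec N A p) ^ 2 = dot m (vadd (vscale T (matvec N A u)) (matvec N A v)) (vadd (vscale T (matvec N A u)) (matvec N A v))).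
  { rewrite norm2_sq. unfold p. rewrite matvec_add, matvec_scal. auto. }
  assert (Aq: norm2 m (matvec N A q) ^ 2 = dot m (vadd (vscale T (matvec N A u)) (vscale (-1) (matvec N A v))) (vadd (vscale T (matvec N A u)) (vscale (-1) (matvec N A v)))).
  { rewrite norm2_sq. unfold q. rewrite matvec_add, !matvec_scal. auto. }
  assert (H3 := polar m (matvec N A u) (matvec N A v) T).
  assert (4*T*dot m (matvec N A u) (matvec N A v) <= 2*delta*(T^2 * norm2 N u ^ 2 + norm2 N v ^ 2)) by lra.
  assert (dot m (matvec N A u) (matvec N A v) <= delta*(T^2 * norm2 N u ^ 2 + norm2 N v ^ 2)/(2*T)).
  { apply Rmult_le_reg_l with (2*T). lra. replace (2 * T * (delta * (T ^ 2 * norm2 N u ^ 2 + norm2 N v ^ 2) / (2 * T))) with (delta * (T ^ 2 * norm2 N u ^ 2 + norm2 N v ^ 2)) by (field; lra). lra. }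
  replace (delta * (T * norm2 N u ^ 2 + norm2 N v ^ 2 / T) / 2) with (delta*(T^2 * norm2 N u ^ 2 + norm2 N v ^ 2)/(2*T)) by (field; lra).
  auto. Qed.

Lemma rip_inner u v : w0norm N B blk w u <= s -> w0norm N B blk w v <= s -> (forall j, (j<N)%nat -> u j * v j = 0) ->
  Rabs (dot m (matvec N A u) (matvec N A v)) <= delta * norm2 N u * norm2 N v.
Proof. intros Hu Hv Huv. apply Rabs_le. split.
  - assert (H := rip_upper u (vscale (-1) v) Hu). rewrite matvec_scal, dot_scal_r, norm2_opp in H.
    assert (H' : -1 * dot m (matvec N A u) (matvec N A v) <= delta * norm2 N u * norm2 N v).
    { apply H. eapply Rle_trans. apply w0norm_scal. auto. intros j Hj. unfold vscale. specialize (Huv j Hj). nra. }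
    lra.
  - apply rip_upper; auto. Qed.

End RIP.
Definition inb (L : list nat) (b : nat) : bool := existsb (Nat.eqb b) L.

Lemma inb_In L b : inb L b = true <-> In b L.
Proof. unfold inb. rewrite existsb_exists. split.
  - intros [x [H1 H2]]. apply Nat.eqb_eq in H2. subst. auto.
  - intros H. exists b. split; auto. apply Nat.eqb_refl. Qed.

Lemma inb_app L1 L2 b : inb (L1 ++ L2) b = orb (inb L1 b) (inb L2 b).
Proof. unfold inb. apply existsb_app. Qed.

Lemma inb_false L b : inb L b = false <-> ~ In b L.
Proof. rewrite <- inb_In. destruct (inb L b); split; intros; try congruence; auto. Qed.

Lemma NoDup_app_disj (L1 L2 : list nat) x : NoDup (L1 ++ L2) -> In x L1 -> ~ In x L2.
Proof. induction L1; simpl; intros H Hx; [contradiction|]. inversion H; subst. destruct Hx as [Hx|Hx].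
  - subst. intro. apply H2. apply in_or_app. auto.
  - apply IHL1; auto. Qed.

Lemma inb_app_disj (L1 L2 : list nat) b : NoDup (L1 ++ L2) -> andb (inb L1 b) (inb L2 b) = false.
Proof. intros H. destruct (inb L1 b) eqn:E1; auto. simpl. apply inb_false. apply inb_In in E1. eapply NoDup_app_disj; eauto. Qed.

Definition lsum (L : list nat) (g : nat -> R) : R := fold_right (fun b acc => g b + acc) 0 L.

Lemma fsum_inb B L g : NoDup L -> (forall b, In b L -> (b < B)%nat) ->
  fsum B (fun b => if inb L b then g b else 0) = lsum L g.
Proof. induction L as [|a L IH]; intros Hnd HB; simpl.
  - apply fsum_zero.
  - inversion Hnd; subst.
    rewrite (fsum_ext B _ (fun b => (if Nat.eq_dec a b then g b else 0) + (if inb L b then g b else 0))).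
    + rewrite fsum_plus, fsum_single, IH. 2: auto. 2: intros; apply HB; simpl; auto.
      destruct (Nat.ltb_spec a B); [auto|]. specialize (HB a (or_introl eq_refl)). lia.
    + intros b Hb. unfold inb at 1. simpl. fold (inb L b). destruct (Nat.eq_dec a b).
      * subst. rewrite Nat.eqb_refl. simpl. destruct (inb L b) eqn:E; [|ring]. apply inb_In in E. contradiction.
      * destruct (Nat.eqb_spec b a); [subst; contradiction|]. simpl. ring. Qed.

Fixpoint greedy (wt : nat -> R) (bud : R) (L : list nat) : list nat * list nat :=
  match L with
  | nil => (nil, nil)
  | b :: L' => if Rle_dec (wt b) bud then
                 let p := greedy wt (bud - wt b) L' in (b :: fst p, snd p)
               else (nil, L)
  end.

Lemma greedy_app wt bud L : fst (greedy wt bud L) ++ snd (greedy wt bud L) = L.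
Proof. revert bud; induction L; intros; simpl; auto. destruct (Rle_dec (wt a) bud); simpl; auto. rewrite IHL. auto. Qed.

Lemma greedy_le wt bud L : 0 <= bud -> lsum (fst (greedy wt bud L)) wt <= bud.
Proof. revert bud; induction L; intros bud Hb; simpl; auto. destruct (Rle_dec (wt a) bud); simpl.
  - assert (H := IHL (bud - wt a) ltac:(lra)). lra.
  - auto. Qed.

Lemma greedy_gt wt bud L c R' : snd (greedy wt bud L) = c :: R' -> lsum (fst (greedy wt bud L)) wt + wt c > bud.
Proof. revert bud; induction L; intros bud H; simpl in *; [discriminate|]. destruct (Rle_dec (wt a) bud); simpl in *.
  - assert (H1 := IHL (bud - wt a) H). lra.
  - inversion H; subst. simpl. lra. Qed.

Lemma greedy_len wt bud L : (forall b, In b L -> wt b <= bud) -> L <> nil -> (length (snd (greedy wt bud L)) < length L)%nat.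
Proof. intros H Hn. destruct L as [|a L]; [congruence|]. simpl. destruct (Rle_dec (wt a) bud).
  - simpl. assert (H1 := greedy_app wt (bud - wt a) L). rewrite <- H1 at 2. rewrite length_app. lia.
  - exfalso. apply n. apply H. simpl; auto. Qed.

Lemma SS_app (Rel : nat -> nat -> Prop) L1 L2 : StronglySorted Rel (L1 ++ L2) -> forall x y, In x L1 -> In y L2 -> Rel x y.
Proof. induction L1; simpl; intros H x y Hx Hy; [contradiction|]. apply StronglySorted_inv in H. destruct H as [H1 H2].
  destruct Hx as [Hx|Hx].
  - subst. rewrite Forall_forall in H2. apply H2. apply in_or_app. auto.
  - apply IHL1; auto. Qed.

Fixpoint ins (f : nat -> R) (a : nat) (L : list nat) : list nat :=
  match L with
  | nil => a :: nil
  | b :: L' => if Rle_dec (f b) (f a) then a :: b :: L' else b :: ins f a L'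
  end.

Lemma ins_perm f a L : Permutation (a :: L) (ins f a L).
Proof. induction L; simpl; auto. destruct (Rle_dec (f a0) (f a)); auto.
  eapply perm_trans. apply perm_swap. apply perm_skip. auto. Qed.

Lemma ins_sorted f a L : StronglySorted (fun x y => f y <= f x) L -> StronglySorted (fun x y => f y <= f x) (ins f a L).
Proof. induction L as [|b L IH]; simpl; intros H.
  - constructor; auto.
  - apply StronglySorted_inv in H. destruct H as [H1 H2]. destruct (Rle_dec (f b) (f a)).
    + constructor. constructor; auto. constructor; auto. rewrite Forall_forall in *. intros x Hx. specialize (H2 x Hx). lra.
    + constructor. auto. rewrite Forall_forall in *. intros x Hx.
      assert (Hx' : In x (a :: L)) by (eapply Permutation_in; [apply Permutation_sym, ins_perm| exact Hx]).
      destruct Hx' as [Hx'|Hx']; [subst; lra| auto]. Qed.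

Lemma sort_exists (f : nat -> R) L : exists L', Permutation L L' /\ StronglySorted (fun x y => f y <= f x) L'.
Proof. induction L as [|a L [L' [H1 H2]]].
  - exists nil. split; constructor.
  - exists (ins f a L'). split.
    + eapply perm_trans. apply perm_skip. exact H1. apply ins_perm.
    + apply ins_sorted. auto. Qed.
Section NSP.
Variables (N B : nat) (blk : nat -> nat) (w : nat -> R) (m : nat) (A : nat -> nat -> R) (s delta : R) (v : nat -> R).
Hypothesis Hblk : forall j, (j < N)%nat -> (blk j < B)%nat.
Hypothesis Hw : forall b, (b < B)%nat -> 1 <= w b.
Hypothesis Hd : 0 <= delta.
Hypothesis Hd1 : delta < 1.
Hypothesis Hs0 : 0 < s.
Hypothesis Hws : forall b, (b < B)%nat -> w b ^ 2 <= s / 2.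
Hypothesis HRIP : forall u, w0norm N B blk w u <= 2 * s ->
    (1 - delta) * norm2 N u ^ 2 <= norm2 m (matvec N A u) ^ 2 /\
    norm2 m (matvec N A u) ^ 2 <= (1 + delta) * norm2 N u ^ 2.

Definition wt (b : nat) : R := w b ^ 2.
Definition ratio (b : nat) : R := blocknorm N blk v b / w b.
Definition SRel := fun x y => ratio y <= ratio x.

Lemma Wt_inb L : NoDup L -> (forall b, In b L -> (b < B)%nat) -> Wt B w (inb L) = lsum L wt.
Proof. intros. unfold Wt. apply fsum_inb; auto. Qed.

Lemma restr_nil : restr blk (inb nil) v = fun _ => 0.
Proof. apply functional_extensionality. intros. unfold restr. reflexivity. Qed.

Lemma dot_zero_r n p : dot n p (fun _ => 0) = 0.
Proof. unfold dot. rewrite (fsum_ext n _ (fun _ => 0)). apply fsum_zero. intros; ring. Qed.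

Lemma matvec_zero : matvec N A (fun _ => 0) = fun _ => 0.
Proof. apply functional_extensionality. intros. unfold matvec. rewrite (fsum_ext N _ (fun _ => 0)). apply fsum_zero. intros; ring. Qed.

Lemma ratio_bound (G : list nat) c : NoDup G -> (forall b, In b G -> (b < B)%nat) -> (c < B)%nat ->
  (forall b, In b G -> ratio c <= ratio b) -> s / 2 < Wt B w (inb G) ->
  blocknorm N blk v c <= (2 * L1 N B blk w (inb G) v / s) * w c.
Proof. intros Hnd HG Hc Hrat HW.
  assert (H1 : ratio c * Wt B w (inb G) <= L1 N B blk w (inb G) v).
  { apply Wt_le_L1; auto. intros b Hb Hin. apply inb_In in Hin. specialize (Hrat b Hin).
    assert (Hwb := Hw b Hb). unfold ratio in *.
    apply Rmult_le_compat_r with (r := w b) in Hrat; [|lra].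
    replace (blocknorm N blk v b / w b * w b) with (blocknorm N blk v b) in Hrat by (field; lra). exact Hrat. }
  assert (Hwc := Hw c Hc). assert (Hbc := bn_nonneg N blk v c).
  assert (Hr : 0 <= ratio c) by (unfold ratio; apply Rmult_le_pos; [auto| left; apply Rinv_0_lt_compat; lra]).
  assert (ratio c <= 2 * L1 N B blk w (inb G) v / s).
  { apply Rmult_le_reg_r with (s/2). lra. replace (2 * L1 N B blk w (inb G) v / s * (s / 2)) with (L1 N B blk w (inb G) v) by (field; lra). nra. }
  replace (blocknorm N blk v c) with (ratio c * w c) by (unfold ratio; field; lra). nra. Qed.

Lemma claim n : forall (Rl : list nat), (length Rl <= n)%nat -> NoDup Rl -> (forall b, In b Rl -> (b < B)%nat) ->
  StronglySorted SRel Rl -> forall q a, 0 <= a -> w0norm N B blk w q <= s ->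
  (forall j, (j < N)%nat -> inb Rl (blk j) = true -> q j = 0) ->
  (forall c, In c Rl -> blocknorm N blk v c <= (2 * a / s) * w c) ->
  Rabs (dot m (matvec N A q) (matvec N A (restr blk (inb Rl) v))) <= delta * norm2 N q * ((a + 2 * L1 N B blk w (inb Rl) v) / sqrt (2 * s)).
Proof.
  assert (Hs2 : 0 < sqrt (2*s)) by (apply sqrt_lt_R0; lra).
  induction n as [|n IH]; intros Rl Hlen Hnd HB Hss q a Ha Hq Hqz Hrat.
  - destruct Rl; [|simpl in Hlen; lia]. rewrite restr_nil, matvec_zero, dot_zero_r, Rabs_R0.
    apply Rmult_le_pos. apply Rmult_le_pos; [auto|apply norm2_nonneg]. apply Rmult_le_pos. assert (H := L1_nonneg N B blk w Hw (inb nil) v). lra.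
    left; apply Rinv_0_lt_compat; auto.
  - destruct Rl as [|c0 Rl0] eqn:ERl.
    + rewrite restr_nil, matvec_zero, dot_zero_r, Rabs_R0.
      apply Rmult_le_pos. apply Rmult_le_pos; [auto|apply norm2_nonneg]. apply Rmult_le_pos. assert (H := L1_nonneg N B blk w Hw (inb nil) v). lra.
      left; apply Rinv_0_lt_compat; auto.
    + rewrite <- ERl in *. 
      set (G := fst (greedy wt s Rl)). set (R' := snd (greedy wt s Rl)).
      assert (Happ : G ++ R' = Rl) by apply greedy_app.
      assert (Hlen' : (length R' <= n)%nat).
      { assert (length R' < length Rl)%nat. apply greedy_len. intros b Hb. unfold wt. specialize (Hws b (HB b Hb)). lra.
        rewrite ERl; discriminate. lia. }
      rewrite <- Happ in Hnd, HB, Hss.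
      assert (HndG : NoDup G) by (eapply NoDup_app_remove_r; eauto).
      assert (HndR : NoDup R') by (eapply NoDup_app_remove_l; eauto).
      assert (HBG : forall b, In b G -> (b < B)%nat) by (intros; apply HB; apply in_or_app; auto).
      assert (HBR : forall b, In b R' -> (b < B)%nat) by (intros; apply HB; apply in_or_app; auto).
      assert (HssR : StronglySorted SRel R').
      { clear -Hss. induction G; simpl in *; auto. apply StronglySorted_inv in Hss. apply IHG. tauto. }
      assert (Hsplit : restr blk (inb Rl) v = vadd (restr blk (inb G) v) (restr blk (inb R') v)).
      { apply functional_extensionality. intros j. unfold restr, vadd. rewrite <- Happ, inb_app.
        assert (Hdj := inb_app_disj G R' (blk j) Hnd).
        destruct (inb G (blk j)), (inb R' (blk j)); simpl in *; try discriminate; ring. }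
      assert (HL1 : L1 N B blk w (inb Rl) v = L1 N B blk w (inb G) v + L1 N B blk w (inb R') v).
      { unfold L1. apply fsum_pred_split. intros. rewrite <- Happ. apply inb_app. intros. apply inb_app_disj; auto. }
      assert (HWG : Wt B w (inb G) <= s).
      { rewrite Wt_inb; auto. apply greedy_le. lra. }
      set (aG := L1 N B blk w (inb G) v).
      assert (HaG : 0 <= aG) by apply L1_nonneg, Hw.
      assert (H1 : Rabs (dot m (matvec N A q) (matvec N A (restr blk (inb G) v))) <= delta * norm2 N q * ((a + aG) / sqrt (2*s))).
      { eapply Rle_trans. apply (rip_inner N B blk w m A s delta Hd HRIP).
        - auto.
        - eapply Rle_trans. apply w0norm_restr. auto.
        - intros j Hj. unfold restr. destruct (inb G (blk j)) eqn:E; [|ring].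
          rewrite Hqz. ring. auto. rewrite <- Happ, inb_app, E. auto.
        - apply Rmult_le_compat_l. apply Rmult_le_pos; [auto|apply norm2_nonneg].
          apply norm2_le. apply Rmult_le_pos; [lra| left; apply Rinv_0_lt_compat; auto].
          rewrite <- norm2_sq, (norm2_restr_sq N B blk Hblk).
          eapply Rle_trans. apply (Qs_le_M N B blk w Hw) with (M := 2*a/s).
          { intros b Hb Hin. apply Hrat. rewrite <- Happ. apply in_or_app. left. apply inb_In. auto. }
          replace (((a + aG) / sqrt (2 * s)) ^ 2) with ((a+aG)^2 / (2*s)).
          2: { unfold Rdiv. rewrite Rpow_mult_distr, pow_inv. rewrite pow2_sqrt by lra. auto. }
          fold aG. apply Rmult_le_reg_r with (2*s). lra.
          replace ((a + aG) ^ 2 / (2 * s) * (2 * s)) with ((a+aG)^2) by (field; lra).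
          replace (2 * a / s * aG * (2 * s)) with (4 * a * aG) by (field; lra). assert (H0 := pow2_ge_0 (a - aG)). nra. }
      assert (H2 : Rabs (dot m (matvec N A q) (matvec N A (restr blk (inb R') v))) <= delta * norm2 N q * ((aG + 2 * L1 N B blk w (inb R') v) / sqrt (2*s))).
      { apply IH; auto.
        - intros j Hj Hin. apply Hqz; auto. rewrite <- Happ, inb_app, Hin. destruct (inb G (blk j)); auto.
        - intros c Hc. destruct R' as [|c1 R1] eqn:ER; [contradiction|].
          assert (Hgt := greedy_gt wt s Rl c1 R1). fold G R' in Hgt. rewrite ER in Hgt. specialize (Hgt eq_refl).
          apply ratio_bound; auto.
          + intros b Hb. assert (SS := SS_app SRel G (c1::R1) Hss b c Hb Hc). unfold SRel in SS. auto.
          + rewrite Wt_inb; auto. assert (wt c1 <= s/2) by (unfold wt; apply Hws; apply HBR; simpl; auto). lra. }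
      rewrite Hsplit, matvec_add, dot_add_r, HL1. fold aG.
      set (LR := L1 N B blk w (inb R') v) in *.
      eapply Rle_trans. apply Rabs_triang.
      assert (E : delta * norm2 N q * ((a + 2 * (aG + LR)) / sqrt (2 * s)) =
        delta * norm2 N q * ((a + aG) / sqrt (2 * s)) + delta * norm2 N q * ((aG + 2 * LR) / sqrt (2 * s))) by (field; lra).
      rewrite E. apply Rplus_le_compat; auto.
Qed.


Lemma SS_suffix (L1 L2 : list nat) : StronglySorted SRel (L1 ++ L2) -> StronglySorted SRel L2.
Proof. induction L1; simpl; auto. intros H. apply StronglySorted_inv in H. apply IHL1. tauto. Qed.

Lemma nsp (S : nat -> bool) : Wt B w S <= s ->
  (1 - delta) * sqrt (Qs N B blk S v) <= 2 * delta / sqrt s * L1 N B blk w (fun b => negb (S b)) v + sqrt (1 + delta) * norm2 m (matvec N A v).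
Proof. intros HWS.
  set (Lc := filter (fun b => negb (S b)) (seq 0 B)).
  destruct (sort_exists ratio Lc) as [Ls [Hperm Hsort]].
  assert (HndLs : NoDup Ls) by (eapply Permutation_NoDup; [exact Hperm| apply NoDup_filter, seq_NoDup]).
  assert (HinLs : forall b, In b Ls <-> ((b < B)%nat /\ S b = false)).
  { intros b. split; intros H.
    - apply Permutation_in with (l' := Lc) in H; [|apply Permutation_sym; auto]. unfold Lc in H.
      apply filter_In in H. destruct H as [H1 H2]. apply in_seq in H1. split; [lia|]. destruct (S b); auto.
    - apply Permutation_in with (l := Lc); auto. unfold Lc. apply filter_In. split. apply in_seq. lia. destruct H as [_ H]; rewrite H; auto. }
  set (G1 := fst (greedy wt s Ls)). set (R := snd (greedy wt s Ls)).
  assert (Happ : G1 ++ R = Ls) by apply greedy_app.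
  assert (HndGR : NoDup (G1 ++ R)) by (rewrite Happ; auto).
  assert (HndG : NoDup G1) by (eapply NoDup_app_remove_r; eauto).
  assert (HndR : NoDup R) by (eapply NoDup_app_remove_l; eauto).
  assert (HG1 : forall b, inb G1 b = true -> (b < B)%nat /\ S b = false).
  { intros b H. apply HinLs. rewrite <- Happ. apply in_or_app. left. apply inb_In; auto. }
  assert (HR : forall b, inb R b = true -> (b < B)%nat /\ S b = false).
  { intros b H. apply HinLs. rewrite <- Happ. apply in_or_app. right. apply inb_In; auto. }
  assert (Hdisj : forall b, andb (inb G1 b) (inb R b) = false) by (intros; apply inb_app_disj; auto).
  assert (Hcov : forall b, (b < B)%nat -> negb (S b) = orb (inb G1 b) (inb R b)).
  { intros b Hb. destruct (S b) eqn:ES; simpl.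
    - destruct (inb G1 b) eqn:E1. destruct (HG1 b E1); congruence. destruct (inb R b) eqn:E2; auto. destruct (HR b E2); congruence.
    - symmetry. rewrite <- inb_app, Happ. apply inb_In, HinLs. auto. }
  assert (HBG : forall b, In b G1 -> (b < B)%nat) by (intros b Hb; apply inb_In in Hb; apply HG1; auto).
  assert (HBR : forall b, In b R -> (b < B)%nat) by (intros b Hb; apply inb_In in Hb; apply HR; auto).
  assert (HWG : Wt B w (inb G1) <= s) by (rewrite Wt_inb; auto; apply greedy_le; lra).
  set (v0 := restr blk S v). set (v1 := restr blk (inb G1) v). set (vr := restr blk (inb R) v).
  set (q := restr blk (fun b => orb (S b) (inb G1 b)) v).
  assert (Eq : q = vadd v0 v1).
  { apply functional_extensionality. intros j. unfold q, v0, v1, restr, vadd.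
    destruct (S (blk j)) eqn:ES; destruct (inb G1 (blk j)) eqn:E1; simpl; try ring.
    destruct (HG1 _ E1); congruence. }
  assert (Ev : matvec N A v = vadd (matvec N A q) (matvec N A vr)).
  { rewrite <- matvec_add. apply matvec_ext. intros j Hj. unfold q, vr, restr, vadd.
    specialize (Hcov (blk j) (Hblk j Hj)). specialize (Hdisj (blk j)).
    destruct (S (blk j)); destruct (inb G1 (blk j)); destruct (inb R (blk j)); simpl in *; try discriminate; ring. }
  assert (HWq : w0norm N B blk w q <= 2 * s).
  { eapply Rle_trans. apply w0norm_restr. unfold Wt at 1.
    rewrite (fsum_pred_split B (fun b => w b ^ 2) (fun b => orb (S b) (inb G1 b)) S (inb G1)); auto.
    fold (Wt B w S). fold (Wt B w (inb G1)). lra.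
    intros b _. destruct (S b) eqn:ES; auto. simpl. destruct (inb G1 b) eqn:E1; auto. destruct (HG1 b E1); congruence. }
  destruct (HRIP q HWq) as [Hlo Hhi].
  assert (Hq2 : norm2 N q ^ 2 = norm2 N v0 ^ 2 + norm2 N v1 ^ 2).
  { unfold q, v0, v1. rewrite !(norm2_restr_sq N B blk Hblk). unfold Qs. apply fsum_pred_split; auto.
    intros b _. destruct (S b) eqn:ES; auto. simpl. destruct (inb G1 b) eqn:E1; auto. destruct (HG1 b E1); congruence. }
  set (a1 := L1 N B blk w (inb G1) v).
  assert (Ha1 : 0 <= a1) by apply L1_nonneg, Hw.
  assert (Hrat : forall c, In c R -> blocknorm N blk v c <= (2 * a1 / s) * w c).
  { intros c Hc. destruct R as [|c1 R1] eqn:ER; [contradiction|].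
    assert (Hgt := greedy_gt wt s Ls c1 R1). fold G1 R in Hgt. rewrite ER in Hgt. specialize (Hgt eq_refl).
    apply ratio_bound; auto.
    + intros b Hb. rewrite <- Happ in Hsort. assert (SS := SS_app SRel G1 (c1::R1) Hsort b c Hb Hc). unfold SRel in SS. auto.
    + rewrite Wt_inb; auto. assert (wt c1 <= s/2) by (unfold wt; apply Hws; apply HBR; simpl; auto). lra. }
  assert (HssR : StronglySorted SRel R) by (apply (SS_suffix G1); rewrite Happ; auto).
  set (X := (a1 + 2 * L1 N B blk w (inb R) v) / sqrt (2 * s)).
  assert (C0 : Rabs (dot m (matvec N A v0) (matvec N A vr)) <= delta * norm2 N v0 * X).
  { apply (claim (length R)); auto.
    - eapply Rle_trans. apply w0norm_restr. auto.
    - intros j Hj Hin. unfold v0, restr. destruct (HR _ Hin) as [_ E]. rewrite E. auto. }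
  assert (C1 : Rabs (dot m (matvec N A v1) (matvec N A vr)) <= delta * norm2 N v1 * X).
  { apply (claim (length R)); auto.
    - eapply Rle_trans. apply w0norm_restr. auto.
    - intros j Hj Hin. unfold v1, restr. specialize (Hdisj (blk j)). rewrite Hin in Hdisj.
      destruct (inb G1 (blk j)); simpl in *; try discriminate; auto. }
  assert (HAq : norm2 m (matvec N A q) <= sqrt (1 + delta) * norm2 N q).
  { apply pow_le_sq. apply norm2_nonneg. apply Rmult_le_pos. apply sqrt_pos. apply norm2_nonneg.
    rewrite Rpow_mult_distr, pow2_sqrt by lra. auto. }
  assert (Hdec : norm2 m (matvec N A q) ^ 2 = dot m (matvec N A q) (matvec N A v) - dot m (matvec N A v0) (matvec N A vr) - dot m (matvec N A v1) (matvec N A vr)).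
  { assert (Er : dot m (matvec N A q) (matvec N A vr) = dot m (matvec N A v0) (matvec N A vr) + dot m (matvec N A v1) (matvec N A vr)).
    { rewrite Eq, matvec_add, dot_sym, dot_add_r. rewrite (dot_sym m (matvec N A vr) (matvec N A v0)), (dot_sym m (matvec N A vr) (matvec N A v1)). ring. }
    rewrite Ev, dot_add_r, norm2_sq. lra. }
  assert (Hcs := CS m (matvec N A q) (matvec N A v)).
  assert (HX : sqrt 2 * X <= 2 / sqrt s * L1 N B blk w (fun b => negb (S b)) v).
  { assert (E : L1 N B blk w (fun b => negb (S b)) v = a1 + L1 N B blk w (inb R) v).
    { unfold L1. apply fsum_pred_split; auto. }
    rewrite E. unfold X. rewrite sqrt_mult_alt by lra.
    assert (H2 := L1_nonneg N B blk w Hw (inb R) v).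
    assert (Hs1 : 0 < sqrt s) by (apply sqrt_lt_R0; lra). assert (Hr2 : 0 < sqrt 2) by (apply sqrt_lt_R0; lra).
    replace (sqrt 2 * ((a1 + 2 * L1 N B blk w (inb R) v) / (sqrt 2 * sqrt s))) with ((a1 + 2 * L1 N B blk w (inb R) v) / sqrt s) by (field; lra).
    replace (2 / sqrt s * (a1 + L1 N B blk w (inb R) v)) with ((2*a1 + 2 * L1 N B blk w (inb R) v) / sqrt s) by (field; lra).
    unfold Rdiv. apply Rmult_le_compat_r. left; apply Rinv_0_lt_compat; auto. lra. }
  assert (Hsum : norm2 N v0 + norm2 N v1 <= sqrt 2 * norm2 N q).
  { apply pow_le_sq. assert (H1 := norm2_nonneg N v0). assert (H2 := norm2_nonneg N v1). lra.
    apply Rmult_le_pos. apply sqrt_pos. apply norm2_nonneg.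
    rewrite Rpow_mult_distr, pow2_sqrt, Hq2 by lra. assert (H0 := pow2_ge_0 (norm2 N v0 - norm2 N v1)). nra. }
  assert (HX0 : 0 <= X).
  { unfold X. apply Rmult_le_pos. assert (H2 := L1_nonneg N B blk w Hw (inb R) v). lra.
    left; apply Rinv_0_lt_compat; apply sqrt_lt_R0; lra. }
  set (RHS := 2 * delta / sqrt s * L1 N B blk w (fun b => negb (S b)) v + sqrt (1 + delta) * norm2 m (matvec N A v)).
  assert (Hmain : (1 - delta) * norm2 N q ^ 2 <= norm2 N q * RHS).
  { assert (C0' : - dot m (matvec N A v0) (matvec N A vr) <= delta * norm2 N v0 * X).
    { eapply Rle_trans; [apply Rle_abs|]. rewrite Rabs_Ropp. exact C0. }
    assert (C1' : - dot m (matvec N A v1) (matvec N A vr) <= delta * norm2 N v1 * X).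
    { eapply Rle_trans; [apply Rle_abs|]. rewrite Rabs_Ropp. exact C1. }
    assert (HqN := norm2_nonneg N q). assert (HAv := norm2_nonneg m (matvec N A v)).
    assert (Hv0 := norm2_nonneg N v0). assert (Hv1 := norm2_nonneg N v1).
    assert (T1 : dot m (matvec N A q) (matvec N A v) <= sqrt (1 + delta) * norm2 N q * norm2 m (matvec N A v)).
    { eapply Rle_trans. exact Hcs. apply Rmult_le_compat_r; auto. }
    assert (T2 : delta * (norm2 N v0 + norm2 N v1) * X <= norm2 N q * (2 * delta / sqrt s * L1 N B blk w (fun b => negb (S b)) v)).
    { apply Rle_trans with (delta * (sqrt 2 * norm2 N q) * X).
      apply Rmult_le_compat_r; auto. apply Rmult_le_compat_l; auto.
      replace (delta * (sqrt 2 * norm2 N q) * X) with (delta * norm2 N q * (sqrt 2 * X)) by ring.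
      replace (norm2 N q * (2 * delta / sqrt s * L1 N B blk w (fun b => negb (S b)) v)) with (delta * norm2 N q * (2 / sqrt s * L1 N B blk w (fun b => negb (S b)) v)).
      2: { unfold Rdiv. ring. }
      apply Rmult_le_compat_l; auto. apply Rmult_le_pos; auto. }
    unfold RHS. nra. }
  assert (Hv0q : sqrt (Qs N B blk S v) <= norm2 N q).
  { replace (sqrt (Qs N B blk S v)) with (norm2 N v0).
    2: { unfold v0. rewrite <- (norm2_restr_sq N B blk Hblk). rewrite sqrt_pow2; auto. apply norm2_nonneg. }
    apply pow_le_sq; try apply norm2_nonneg. rewrite Hq2. assert (H0 := pow2_ge_0 (norm2 N v1)). lra. }
  fold RHS.
  assert (HRHS : 0 <= RHS).
  { unfold RHS. apply Rplus_le_le_0_compat. apply Rmult_le_pos. unfold Rdiv. apply Rmult_le_pos. lra.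
    left; apply Rinv_0_lt_compat; apply sqrt_lt_R0; lra. apply L1_nonneg, Hw.
    apply Rmult_le_pos. apply sqrt_pos. apply norm2_nonneg. }
  assert (HqN := norm2_nonneg N q).
  destruct (Req_dec (norm2 N q) 0) as [E0|E0].
  - rewrite E0 in Hv0q. assert (sqrt (Qs N B blk S v) = 0) by (assert (H:=sqrt_pos (Qs N B blk S v)); lra).
    rewrite H. lra.
  - assert ((1 - delta) * norm2 N q <= RHS).
    { apply Rmult_le_reg_l with (norm2 N q). lra. nra. }
    apply Rle_trans with ((1 - delta) * norm2 N q); auto. apply Rmult_le_compat_l; lra.
Qed.

Lemma l2_bound : (1 - delta) * norm2 N v <= 2 * delta / sqrt s * w21norm N B blk w v + sqrt (1 + delta) * norm2 m (matvec N A v) + (1 - delta) * (w21norm N B blk w v / sqrt (2 * s)).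
Proof.
  destruct (sort_exists ratio (seq 0 B)) as [Ls [Hperm Hsort]].
  assert (HndLs : NoDup Ls) by (eapply Permutation_NoDup; [exact Hperm| apply seq_NoDup]).
  assert (HinLs : forall b, In b Ls <-> (b < B)%nat).
  { intros b. split; intros H.
    - apply Permutation_in with (l' := seq 0 B) in H; [|apply Permutation_sym; auto]. apply in_seq in H. lia.
    - apply Permutation_in with (l := seq 0 B); auto. apply in_seq. lia. }
  set (G := fst (greedy wt s Ls)). set (R := snd (greedy wt s Ls)).
  assert (Happ : G ++ R = Ls) by apply greedy_app.
  assert (HndGR : NoDup (G ++ R)) by (rewrite Happ; auto).
  assert (HndG : NoDup G) by (eapply NoDup_app_remove_r; eauto).
  assert (HndR : NoDup R) by (eapply NoDup_app_remove_l; eauto).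
  assert (HBG : forall b, In b G -> (b < B)%nat) by (intros b Hb; apply HinLs; rewrite <- Happ; apply in_or_app; auto).
  assert (HBR : forall b, In b R -> (b < B)%nat) by (intros b Hb; apply HinLs; rewrite <- Happ; apply in_or_app; auto).
  assert (Hdisj : forall b, andb (inb G b) (inb R b) = false) by (intros; apply inb_app_disj; auto).
  assert (Hcov : forall b, (b < B)%nat -> negb (inb G b) = inb R b).
  { intros b Hb. specialize (Hdisj b). destruct (inb G b) eqn:E1; simpl in *. auto.
    symmetry. assert (H : inb (G ++ R) b = true) by (rewrite Happ; apply inb_In, HinLs; auto).
    rewrite inb_app, E1 in H. auto. }
  assert (HWG : Wt B w (inb G) <= s) by (rewrite Wt_inb; auto; apply greedy_le; lra).
  assert (Hn := nsp (inb G) HWG).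
  assert (EL : L1 N B blk w (fun b => negb (inb G b)) v = L1 N B blk w (inb R) v).
  { unfold L1. apply fsum_ext. intros b Hb. rewrite Hcov; auto. }
  assert (EW := L1_split N B blk w (inb G) v). rewrite EL in EW, Hn.
  set (aG := L1 N B blk w (inb G) v) in *. set (aR := L1 N B blk w (inb R) v) in *.
  assert (HaG : 0 <= aG) by apply L1_nonneg, Hw. assert (HaR : 0 <= aR) by apply L1_nonneg, Hw.
  assert (Hrat : forall c, In c R -> blocknorm N blk v c <= (2 * aG / s) * w c).
  { intros c Hc. destruct R as [|c1 R1] eqn:ER; [contradiction|].
    assert (Hgt := greedy_gt wt s Ls c1 R1). fold G R in Hgt. rewrite ER in Hgt. specialize (Hgt eq_refl).
    apply ratio_bound; auto.
    + intros b Hb. rewrite <- Happ in Hsort. assert (SS := SS_app SRel G (c1::R1) Hsort b c Hb Hc). unfold SRel in SS. auto.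
    + rewrite Wt_inb; auto. assert (wt c1 <= s/2) by (unfold wt; apply Hws; apply HBR; simpl; auto). lra. }
  assert (HQR : Qs N B blk (inb R) v <= 2 * aG / s * aR).
  { apply (Qs_le_M N B blk w Hw). intros b Hb Hin. apply Hrat. apply inb_In. auto. }
  assert (Hv2 : norm2 N v ^ 2 = Qs N B blk (inb G) v + Qs N B blk (inb R) v).
  { rewrite (norm2_blocks N B blk Hblk). unfold Qs.
    apply (fsum_pred_split B (fun b => blocknorm N blk v b ^ 2) (fun _ => true) (inb G) (inb R)); auto.
    intros b Hb. rewrite <- Hcov by auto. destruct (inb G b); auto. }
  assert (Hs2 : 0 < sqrt (2*s)) by (apply sqrt_lt_R0; lra).
  assert (HsR : sqrt (Qs N B blk (inb R) v) <= w21norm N B blk w v / sqrt (2 * s)).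
  { rewrite EW. apply pow_le_sq. apply sqrt_pos. apply Rmult_le_pos. lra. left; apply Rinv_0_lt_compat; auto.
    rewrite pow2_sqrt by (apply Qs_nonneg).
    replace (((aG + aR) / sqrt (2 * s)) ^ 2) with ((aG+aR)^2 / (2*s)).
    2: { unfold Rdiv. rewrite Rpow_mult_distr, pow_inv. rewrite pow2_sqrt by lra. auto. }
    eapply Rle_trans. exact HQR. apply Rmult_le_reg_r with (2*s). lra.
    replace ((aG + aR) ^ 2 / (2 * s) * (2 * s)) with ((aG+aR)^2) by (field; lra).
    replace (2 * aG / s * aR * (2 * s)) with (4 * aG * aR) by (field; lra). assert (H0 := pow2_ge_0 (aG - aR)). nra. }
  assert (Hvv : norm2 N v <= sqrt (Qs N B blk (inb G) v) + sqrt (Qs N B blk (inb R) v)).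
  { assert (H1 := sqrt_pos (Qs N B blk (inb G) v)). assert (H2 := sqrt_pos (Qs N B blk (inb R) v)).
    apply pow_le_sq. apply norm2_nonneg. lra. rewrite Hv2.
    rewrite <- (pow2_sqrt (Qs N B blk (inb G) v)) at 1 by apply Qs_nonneg.
    rewrite <- (pow2_sqrt (Qs N B blk (inb R) v)) at 1 by apply Qs_nonneg. nra. }
  assert (Hle : aR <= w21norm N B blk w v) by lra.
  assert (Hc : 0 <= 2 * delta / sqrt s).
  { unfold Rdiv. apply Rmult_le_pos. lra. left; apply Rinv_0_lt_compat; apply sqrt_lt_R0; lra. }
  assert (2 * delta / sqrt s * aR <= 2 * delta / sqrt s * w21norm N B blk w v) by (apply Rmult_le_compat_l; auto).
  assert ((1-delta) * sqrt (Qs N B blk (inb R) v) <= (1 - delta) * (w21norm N B blk w v / sqrt (2 * s))) by (apply Rmult_le_compat_l; lra).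
  assert ((1-delta) * norm2 N v <= (1-delta) * (sqrt (Qs N B blk (inb G) v) + sqrt (Qs N B blk (inb R) v))) by (apply Rmult_le_compat_l; lra).
  lra.
Qed.

End NSP.
Ltac hints r d :=
  let H1 := fresh in let H2 := fresh in let H3 := fresh in let H4 := fresh in
  let H5 := fresh in let H6 := fresh in let H7 := fresh in let H8 := fresh in
  assert (H1 : 0 <= (r - 1.414) * d) by (apply Rmult_le_pos; lra);
  assert (H2 : 0 <= (1.415 - r) * d) by (apply Rmult_le_pos; lra);
  assert (H3 : 0 <= d * d) by nra;
  assert (H4 : 0 <= (r - 1.414) * (d*d)) by (apply Rmult_le_pos; lra);
  assert (H5 : 0 <= (1.415 - r) * (d*d)) by (apply Rmult_le_pos; lra);
  assert (H6 : 0 <= (0.2613 - d) * d) by (apply Rmult_le_pos; lra);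
  assert (H7 : 0 <= (0.2613 - d) * (d*d)) by (apply Rmult_le_pos; lra);
  assert (H8 : 0 <= (r-1.414) * ((0.2613 - d) * d)) by (apply Rmult_le_pos; lra).
Lemma r1 r d : 1.414 < r < 1.415 -> 0 <= d -> d < 0.2613 ->
 0 <= (-8)*d + 36*d^2 -52*d^3 + 6*r*d -24*r*d^2 +34*r*d^3.
Proof. intros.
 assert (0 <= (-8 + 6*r) + (36-24*r)*d + (34*r-52)*(d*d)).
 { hints r d. nra. }
 replace ((-8)*d + 36*d^2 -52*d^3 + 6*r*d -24*r*d^2 +34*r*d^3) with
   (d*((-8 + 6*r) + (36-24*r)*d + (34*r-52)*(d*d))) by ring.
 apply Rmult_le_pos; lra. Qed.
Lemma r2 r d : 1.414 < r < 1.415 -> 0 <= d -> d < 0.2613 ->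
 0 <= 1 -8*d + 7*d^2 + 6*r*d -10*r*d^2.
Proof. intros. hints r d. nra. Qed.
Lemma r3 r d : 1.414 < r < 1.415 -> 0 <= d -> d < 0.2613 ->
 0 <= 1 -9*d +35*d^2 -51*d^3 -1/2*r + 9/2*r*d -39/2*r*d^2 + 79/2*r*d^3.
Proof. intros. hints r d. nra. Qed.
Lemma r4 r d : 1.414 < r < 1.415 -> 0 <= d -> d < 0.2613 ->
 0 <= 4 -16*d +12*d^2 -2*r +12*r*d -10*r*d^2.
Proof. intros. hints r d. nra. Qed.

Lemma i1 r d : r*r = 2 -> 1.414 < r < 1.415 -> 0 <= d -> d < 0.2613 ->
  (1+d)*((1-d)*(1-d*(2*r+1))) <= (1+d*(2*r-3))^2*(1-3*d).
Proof. intros Hr Hb Hd Hd2.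
  assert (E : (1+d*(2*r-3))^2*(1-3*d) - (1+d)*((1-d)*(1-d*(2*r+1))) = (r*r-2)*(4*d^2-12*d^3) + ((-8)*d + 36*d^2 -52*d^3 + 6*r*d -24*r*d^2 +34*r*d^3)) by ring.
  rewrite Hr in E. assert (H := r1 r d Hb Hd Hd2). lra. Qed.
Lemma i2 r d : r*r = 2 -> 1.414 < r < 1.415 -> 0 <= d -> d < 0.2613 ->
  4*((1-d)*(1-d*(2*r+1))) <= 2*(3+d*(2*r-3))*(1-3*d).
Proof. intros Hr Hb Hd Hd2.
  assert (E : 2*(3+d*(2*r-3))*(1-3*d) - 4*((1-d)*(1-d*(2*r+1))) = 2*(1 -8*d + 7*d^2 + 6*r*d -10*r*d^2)) by ring.
  assert (H := r2 r d Hb Hd Hd2). lra. Qed.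
Lemma i3 r d : r*r = 2 -> 1.414 < r < 1.415 -> 0 <= d -> d < 0.2613 ->
  (2*d + (1-d)*(r/2))*(1+d)*(1-d*(2*r+1)) <= (1-3*d)*(1+d*(2*r-3))^2.
Proof. intros Hr Hb Hd Hd2.
  assert (E : (1-3*d)*(1+d*(2*r-3))^2 - (2*d + (1-d)*(r/2))*(1+d)*(1-d*(2*r+1)) = (r*r-2)*(d + 4*d^2 - 13*d^3) + (1 -9*d +35*d^2 -51*d^3 -1/2*r + 9/2*r*d -39/2*r*d^2 + 79/2*r*d^3)) by (field).
  rewrite Hr in E. assert (H := r3 r d Hb Hd Hd2). lra. Qed.
Lemma i4 r d : r*r = 2 -> 1.414 < r < 1.415 -> 0 <= d -> d < 0.2613 ->
  (4*(2*d+(1-d)*(r/2)) + 2*(1-3*d))*(1-d*(2*r+1)) <= 2*(3+d*(2*r-3))*(1-3*d).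
Proof. intros Hr Hb Hd Hd2.
  assert (E : 2*(3+d*(2*r-3))*(1-3*d) - (4*(2*d+(1-d)*(r/2)) + 2*(1-3*d))*(1-d*(2*r+1)) = (r*r-2)*(4*d - 4*d^2) + (4 -16*d +12*d^2 -2*r +12*r*d -10*r*d^2)) by field.
  rewrite Hr in E. assert (H := r4 r d Hb Hd Hd2). lra. Qed.
Lemma wmax_ge B w : forall b, (b < B)%nat -> w b <= wmax B w.
Proof. induction B; intros b Hb; [lia|]. simpl. destruct (Nat.eq_dec b B).
  - subst. apply Rmax_r.
  - eapply Rle_trans. apply IHB. lia. apply Rmax_l. Qed.

Lemma Rinf_spec (E : R -> Prop) : (exists x, E x) -> (forall x, E x -> 0 <= x) -> is_glb E (Rinf E).
Proof. intros [x0 Hx0] Hpos. unfold Rinf. apply epsilon_spec.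
  destruct (completeness (fun y => E (- y))) as [M [HM1 HM2]].
  - exists 0. intros y Hy. specialize (Hpos _ Hy). lra.
  - exists (- x0). rewrite Ropp_involutive. auto.
  - exists (- M). split.
    + intros x Hx. assert (HM1' := HM1 (- x)). unfold is_upper_bound in HM1. cbv beta in HM1'. rewrite Ropp_involutive in HM1'. specialize (HM1' Hx). lra.
    + intros m' Hm'. assert (M <= - m').
      { apply HM2. intros y Hy. specialize (Hm' _ Hy). lra. }
      lra. Qed.

Lemma eps_le a b c : 0 <= c -> (forall e, 0 < e -> a <= b + e * c) -> a <= b.
Proof. intros Hc H. destruct (Rle_lt_dec a b); auto. exfalso.
  set (e := (a - b) / (2 * (c + 1))).
  assert (He : 0 < e) by (unfold e; apply Rdiv_lt_0_compat; lra).
  specialize (H e He).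
  assert (e * c < a - b).
  { unfold e. apply Rle_lt_trans with ((a-b)/2). 
    apply Rmult_le_reg_r with (2*(c+1)). lra. replace ((a - b) / (2 * (c + 1)) * c * (2 * (c + 1))) with ((a-b)*c) by (field; lra).
    replace ((a - b) / 2 * (2 * (c + 1))) with ((a-b)*(c+1)) by (field; lra). nra. lra. }
  lra. Qed.

Lemma glb_pass (E : R -> Prop) sg c X Y : is_glb E sg -> 0 < c -> (forall e, E e -> X <= c * e + Y) -> X <= c * sg + Y.
Proof. intros [_ H2] Hc H. assert ((X - Y) / c <= sg).
  { apply H2. intros e He. specialize (H e He). apply Rmult_le_reg_r with c; auto.
    replace ((X - Y) / c * c) with (X - Y) by (field; lra). lra. }
  apply Rmult_le_compat_r with (r := c) in H0; [|lra]. replace ((X - Y) / c * c) with (X - Y) in H0 by (field; lra). lra. Qed.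

Lemma bn_as_norm2 N blk u b : blocknorm N blk u b = norm2 N (fun j => if Nat.eq_dec (blk j) b then u j else 0).
Proof. unfold blocknorm, norm2. f_equal. apply fsum_ext. intros. destruct (Nat.eq_dec (blk i) b); auto. ring. Qed.

Lemma bn_tri N blk p q b : blocknorm N blk (vadd p q) b <= blocknorm N blk p b + blocknorm N blk q b.
Proof. rewrite !bn_as_norm2. eapply Rle_trans; [|apply mink]. right. apply norm2_ext. intros. unfold vadd.
  destruct (Nat.eq_dec (blk i) b); auto. ring. Qed.

Lemma bn_tri_sub N blk p q b : blocknorm N blk (vsub p q) b <= blocknorm N blk p b + blocknorm N blk q b.
Proof. rewrite !bn_as_norm2. eapply Rle_trans; [|apply mink_sub]. right. apply norm2_ext. intros. unfold vsub.
  destruct (Nat.eq_dec (blk i) b); auto. ring. Qed.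

Lemma bn_ext_block N blk u u' b : (forall j, (j < N)%nat -> blk j = b -> u j = u' j) -> blocknorm N blk u b = blocknorm N blk u' b.
Proof. intros H. unfold blocknorm. f_equal. apply fsum_ext. intros. destruct (Nat.eq_dec (blk i) b); auto. rewrite H; auto. Qed.

Lemma L1_tri N B blk w P u1 u2 u3 : (forall b, (b < B)%nat -> 0 <= w b) ->
  (forall b, (b < B)%nat -> blocknorm N blk u1 b <= blocknorm N blk u2 b + blocknorm N blk u3 b) ->
  L1 N B blk w P u1 <= L1 N B blk w P u2 + L1 N B blk w P u3.
Proof. intros Hw H. unfold L1. rewrite <- fsum_plus. apply fsum_le. intros b Hb. destruct (P b); [|lra].
  specialize (H b Hb). specialize (Hw b Hb). nra. Qed.

Lemma Rinv_nonneg x : 0 <= x -> 0 <= / x.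
Proof. intros H. destruct (Req_dec x 0). subst. rewrite Rinv_0. lra. left. apply Rinv_0_lt_compat. lra. Qed.
Theorem mainTheorem7
  (m N B : nat) (A : nat -> nat -> R) (blk : nat -> nat) (w : nat -> R) (s : R)
  (x e xhat : nat -> R) (eta : R) :
  is_block_structure N B blk ->
  (forall b, (b < B)%nat -> 1 <= w b) ->
  s >= 2 * wmax B w ^ 2 ->
  (exists d, WBRIP N B blk w m A (2 * s) d) ->
  delta_t N B blk w m A (2 * s) < 1 / (2 * sqrt 2 + 1) ->
  norm2 m e <= eta ->
  norm2 m (vsub (matvec N A xhat) (vadd (matvec N A x) e)) <= eta ->
  (forall z, norm2 m (vsub (matvec N A z) (vadd (matvec N A x) e)) <= eta ->
     w21norm N B blk w xhat <= w21norm N B blk w z) ->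
  let d := delta_t N B blk w m A (2 * s) in
  let c_d := 2 * (1 + d * (2 * sqrt 2 - 3)) ^ 2 /
             ((1 - d) * (1 - d * (2 * sqrt 2 + 1))) in
  let d_d := 2 * (3 + d * (2 * sqrt 2 - 3)) * sqrt (1 + d) /
             ((1 - d) * (1 - d * (2 * sqrt 2 + 1))) in
  w21norm N B blk w (vsub x xhat) <= c_d * sigma_s N B blk w s x + d_d * sqrt s * eta /\
  norm2 N (vsub x xhat) <= c_d / sqrt s * sigma_s N B blk w s x + d_d * eta.
Proof.
  intros Hbs Hw Hs [d0 Hd0] Hdlt He Hfeas Hmin d c_d d_d.
  destruct Hbs as [Hblk _]. change (delta_t N B blk w m A (2 * s)) with d in Hdlt.
  assert (Hglb : is_glb (fun dd => WBRIP N B blk w m A (2 * s) dd) d).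
  { unfold d, delta_t. apply Rinf_spec. exists d0; auto. intros z [_ [Hz _]]; lra. }
  destruct Hglb as [Hlb Hgr].
  assert (Hd : 0 <= d) by (apply Hgr; intros z [_ [Hz _]]; lra).
  assert (Happ : forall ep, 0 < ep -> exists dd, WBRIP N B blk w m A (2 * s) dd /\ dd < d + ep).
  { intros ep Hep. destruct (classic (exists dd, WBRIP N B blk w m A (2 * s) dd /\ dd < d + ep)) as [H|H]; auto.
    exfalso. assert (d + ep <= d). { apply Hgr. intros z Hz. destruct (Rle_lt_dec (d+ep) z); auto. exfalso; apply H; exists z; auto. }
    lra. }
  assert (HRIP : forall u, w0norm N B blk w u <= 2 * s ->
    (1 - d) * norm2 N u ^ 2 <= norm2 m (matvec N A u) ^ 2 /\
    norm2 m (matvec N A u) ^ 2 <= (1 + d) * norm2 N u ^ 2).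
  { intros u Hu. assert (H0 := pow2_ge_0 (norm2 N u)). split.
    - apply (eps_le _ _ (norm2 N u ^ 2)); auto. intros ep Hep. destruct (Happ ep Hep) as [dd [[_ [_ Hdd]] Hlt]].
      destruct (Hdd u Hu) as [H1 _]. nra.
    - apply (eps_le _ _ (norm2 N u ^ 2)); auto. intros ep Hep. destruct (Happ ep Hep) as [dd [[_ [_ Hdd]] Hlt]].
      destruct (Hdd u Hu) as [_ H2]. nra. }
  assert (Hr : sqrt 2 * sqrt 2 = 2) by (apply sqrt_sqrt; lra).
  assert (Hr0 : 0 <= sqrt 2) by apply sqrt_pos.
  assert (Hrb : 1.414 < sqrt 2 < 1.415) by (split; nra).
  assert (Hdb : d * (2 * sqrt 2 + 1) < 1).
  { apply Rmult_lt_compat_r with (r := 2 * sqrt 2 + 1) in Hdlt; [|lra].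
    replace (1 / (2 * sqrt 2 + 1) * (2 * sqrt 2 + 1)) with 1 in Hdlt by (field; lra). lra. }
  assert (Hd2 : d < 0.2613) by nra.
  assert (Hd1 : d < 1) by lra.
  assert (HK : 0 < (1 - d) * (1 - d * (2 * sqrt 2 + 1))) by (apply Rmult_lt_0_compat; lra).
  assert (Hs0' : 0 <= s) by (assert (H := pow2_ge_0 (wmax B w)); lra).
  assert (Hsig : is_glb (fun r0 => exists z, w0norm N B blk w z <= s /\ r0 = w21norm N B blk w (vsub x z)) (sigma_s N B blk w s x)).
  { unfold sigma_s. apply Rinf_spec.
    - exists (w21norm N B blk w (vsub x (fun _ => 0))). exists (fun _ => 0). split; auto. rewrite w0norm_zero. lra.
    - intros r0 [z [_ Hz]]. subst. apply w21_nonneg; auto. }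
  assert (Hsig0 : 0 <= sigma_s N B blk w s x).
  { destruct Hsig as [_ H]. apply H. intros r0 [z [_ Hz]]. subst. apply w21_nonneg; auto. }
  assert (Heta : 0 <= eta) by (assert (H := norm2_nonneg m e); lra).
  assert (Hcd : 0 < c_d).
  { unfold c_d. apply Rdiv_lt_0_compat; auto. assert (0 < 1 + d * (2 * sqrt 2 - 3)) by nra. nra. }
  assert (Hdd0 : 0 <= d_d).
  { unfold d_d. unfold Rdiv. apply Rmult_le_pos; [|left; apply Rinv_0_lt_compat; auto].
    apply Rmult_le_pos; [|apply sqrt_pos]. nra. }
  destruct (Nat.eq_dec B 0) as [HB0|HB0].
  { subst B. assert (HN0 : N = 0%nat).
    { destruct N; auto. specialize (Hblk 0%nat ltac:(lia)). lia. }
    subst N. replace (w21norm 0 0 blk w (vsub x xhat)) with 0 by reflexivity.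
    replace (norm2 0 (vsub x xhat)) with 0 by (unfold norm2; simpl; symmetry; apply sqrt_0).
    assert (H1 := sqrt_pos s). split.
    - assert (0 <= c_d * sigma_s 0 0 blk w s x) by (apply Rmult_le_pos; lra).
      assert (0 <= d_d * sqrt s * eta) by (apply Rmult_le_pos; [apply Rmult_le_pos|]; lra). lra.
    - assert (0 <= c_d / sqrt s * sigma_s 0 0 blk w s x).
      { apply Rmult_le_pos; [|lra]. unfold Rdiv. apply Rmult_le_pos. lra. apply Rinv_nonneg; auto. }
      assert (0 <= d_d * eta) by (apply Rmult_le_pos; lra). lra. }
  assert (Hwm : 1 <= wmax B w) by (eapply Rle_trans; [apply (Hw 0%nat); lia| apply wmax_ge; lia]).
  assert (Hs0 : 0 < s) by nra.
  assert (Hws : forall b, (b < B)%nat -> w b ^ 2 <= s / 2).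
  { intros b Hb. assert (H1 := Hw b Hb). assert (H2 := wmax_ge B w b Hb). nra. }
  assert (Hss : 0 < sqrt s) by (apply sqrt_lt_R0; auto).
  set (v := vsub x xhat).
  assert (HAv : norm2 m (matvec N A v) <= 2 * eta).
  { unfold v. rewrite matvec_sub.
    replace (vsub (matvec N A x) (matvec N A xhat)) with (vsub (vscale (-1) (vsub (matvec N A xhat) (vadd (matvec N A x) e))) e).
    2: { apply functional_extensionality. intros i. unfold vsub, vscale, vadd. ring. }
    eapply Rle_trans. apply mink_sub. rewrite norm2_opp. lra. }
  assert (Hx : w21norm N B blk w xhat <= w21norm N B blk w x).
  { apply Hmin. replace (vsub (matvec N A x) (vadd (matvec N A x) e)) with (vscale (-1) e).
    rewrite norm2_opp. auto. apply functional_extensionality. intros i. unfold vsub, vscale, vadd. ring. }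
  assert (L1b : forall z, w0norm N B blk w z <= s ->
     (1 - 3*d) * w21norm N B blk w v <= 2*(1+d) * w21norm N B blk w (vsub x z) + 4 * sqrt (1 + d) * sqrt s * eta).
  { intros z Hz.
    set (Sz := fun b => if excluded_middle_informative (block_nonzero N blk z b) then true else false).
    assert (HWS : Wt B w Sz <= s).
    { replace (Wt B w Sz) with (w0norm N B blk w z); auto. unfold Wt, w0norm, wsetweight, Sz. apply fsum_ext. intros.
      destruct (excluded_middle_informative (block_nonzero N blk z i)); auto. }
    assert (Hn := nsp N B blk w m A s d v Hblk Hw Hd Hd1 Hs0 Hws HRIP Sz HWS).
    assert (HCS := L1_CS N B blk w Sz v).
    assert (Hsv := L1_split N B blk w Sz v). assert (Hsx := L1_split N B blk w Sz x).
    assert (Hsxh := L1_split N B blk w Sz xhat).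
    assert (Hw0 : forall b, (b < B)%nat -> 0 <= w b) by (intros b Hb; specialize (Hw b Hb); lra).
    assert (HxT : L1 N B blk w Sz x <= L1 N B blk w Sz xhat + L1 N B blk w Sz v).
    { apply L1_tri; auto. intros b Hb. rewrite (bn_ext N blk x (vadd xhat v)). apply bn_tri.
      intros j Hj. unfold vadd, v, vsub. ring. }
    assert (HvT : L1 N B blk w (fun b => negb (Sz b)) v <= L1 N B blk w (fun b => negb (Sz b)) x + L1 N B blk w (fun b => negb (Sz b)) xhat).
    { apply L1_tri; auto. intros b Hb. apply bn_tri_sub. }
    assert (He0 : L1 N B blk w (fun b => negb (Sz b)) x <= w21norm N B blk w (vsub x z)).
    { replace (L1 N B blk w (fun b => negb (Sz b)) x) with (L1 N B blk w (fun b => negb (Sz b)) (vsub x z)).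
      apply L1_le_all; auto.
      unfold L1. apply fsum_ext. intros b Hb. unfold Sz.
      destruct (excluded_middle_informative (block_nonzero N blk z b)) as [Hnz|Hnz]; simpl; auto.
      f_equal. apply bn_ext_block. intros j Hj Hbj. unfold vsub.
      destruct (Req_dec (z j) 0) as [Hz0|Hz0]. rewrite Hz0. ring. exfalso. apply Hnz. exists j. auto. }
    set (a := L1 N B blk w Sz v) in *. set (bb := L1 N B blk w (fun b => negb (Sz b)) v) in *.
    set (e0 := L1 N B blk w (fun b => negb (Sz b)) x) in *.
    set (Q' := sqrt (Qs N B blk Sz v)) in *.
    assert (HQ0 : 0 <= Q') by apply sqrt_pos.
    assert (Ha : a <= sqrt s * Q').
    { eapply Rle_trans. exact HCS. apply Rmult_le_compat_r; auto. apply sqrt_le_1_alt. auto. }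
    assert (Hb1 : bb <= 2 * e0 + a) by lra.
    assert (HAv' : sqrt (1 + d) * norm2 m (matvec N A v) <= sqrt (1 + d) * (2 * eta)).
    { apply Rmult_le_compat_l; auto. apply sqrt_pos. }
    assert (T2 : sqrt s * ((1 - d) * Q') <= 2 * d * bb + 2 * sqrt (1 + d) * sqrt s * eta).
    { replace (2 * d * bb + 2 * sqrt (1 + d) * sqrt s * eta) with (sqrt s * (2 * d / sqrt s * bb + sqrt (1 + d) * (2 * eta))) by (field; lra).
      apply Rmult_le_compat_l; lra. }
    assert (T1 : (1 - d) * a <= sqrt s * ((1 - d) * Q')).
    { replace (sqrt s * ((1 - d) * Q')) with ((1-d) * (sqrt s * Q')) by ring. apply Rmult_le_compat_l; lra. }
    assert (Hbb0 : 0 <= bb) by (apply L1_nonneg; auto).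
    assert (Ha0 : 0 <= a) by (apply L1_nonneg; auto).
    assert (P1 : 0 <= (1 - 3*d) * (2*e0 + a - bb)) by (apply Rmult_le_pos; lra).
    assert (P2 : 0 <= d * (2*e0 + a - bb)) by (apply Rmult_le_pos; lra).
    assert (P3 : (1 + d) * e0 <= (1 + d) * w21norm N B blk w (vsub x z)) by (apply Rmult_le_compat_l; lra).
    rewrite Hsv. nra. }
  assert (Hl2 := l2_bound N B blk w m A s d v Hblk Hw Hd Hd1 Hs0 Hws HRIP).
  set (W := w21norm N B blk w v) in *.
  assert (HW0 : 0 <= W) by (apply w21_nonneg; auto).
  assert (Hr2s : sqrt (2 * s) = sqrt 2 * sqrt s) by (apply sqrt_mult_alt; lra).
  assert (Hv2 : (1 - d) * sqrt s * norm2 N v <= (2 * d + (1 - d) * (sqrt 2 / 2)) * W + 2 * sqrt (1 + d) * sqrt s * eta).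
  { assert (H1 : sqrt (1 + d) * norm2 m (matvec N A v) <= sqrt (1 + d) * (2 * eta)).
    { apply Rmult_le_compat_l; auto. apply sqrt_pos. }
    assert (H2 : (1 - d) * norm2 N v <= 2 * d / sqrt s * W + sqrt (1 + d) * (2 * eta) + (1 - d) * (W / sqrt (2 * s))) by lra.
    apply Rmult_le_compat_l with (r := sqrt s) in H2; [|lra].
    replace (sqrt s * (2 * d / sqrt s * W + sqrt (1 + d) * (2 * eta) + (1 - d) * (W / sqrt (2 * s))))
      with ((2 * d + (1 - d) * (sqrt 2 / 2)) * W + 2 * sqrt (1 + d) * sqrt s * eta) in H2.
    2: { assert (Hinv2 : / sqrt 2 = sqrt 2 / 2).
         { apply Rmult_eq_reg_l with (sqrt 2); [|lra]. rewrite Rinv_r by lra. unfold Rdiv. rewrite <- Rmult_assoc, Hr. field. }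
         rewrite Hr2s. unfold Rdiv. rewrite Rinv_mult, Hinv2. field. lra. }
    lra. }
  assert (Hsq : 0 <= sqrt (1 + d)) by apply sqrt_pos.
  assert (I1 := i1 (sqrt 2) d Hr Hrb Hd Hd2).
  assert (I2 := i2 (sqrt 2) d Hr Hrb Hd Hd2).
  assert (I3 := i3 (sqrt 2) d Hr Hrb Hd Hd2).
  assert (I4 := i4 (sqrt 2) d Hr Hrb Hd Hd2).
  set (K := (1 - d) * (1 - d * (2 * sqrt 2 + 1))) in *.
  assert (C1 : 2 * (1 + d) <= c_d * (1 - 3 * d)).
  { unfold c_d. apply Rmult_le_reg_r with K; auto.
    replace (2 * (1 + d * (2 * sqrt 2 - 3)) ^ 2 / K * (1 - 3 * d) * K) with (2 * ((1 + d * (2 * sqrt 2 - 3)) ^ 2 * (1 - 3 * d))) by (field; lra).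
    lra. }
  assert (D1 : 4 * sqrt (1 + d) <= d_d * (1 - 3 * d)).
  { unfold d_d. apply Rmult_le_reg_r with K; auto.
    replace (2 * (3 + d * (2 * sqrt 2 - 3)) * sqrt (1 + d) / K * (1 - 3 * d) * K) with (sqrt (1 + d) * (2 * (3 + d * (2 * sqrt 2 - 3)) * (1 - 3 * d))) by (field; lra).
    replace (4 * sqrt (1 + d) * K) with (sqrt (1 + d) * (4 * K)) by ring.
    apply Rmult_le_compat_l; auto. }
  assert (C2 : (2 * d + (1 - d) * (sqrt 2 / 2)) * (2 * (1 + d)) <= (1 - d) * (1 - 3 * d) * c_d).
  { unfold c_d. apply Rmult_le_reg_r with (1 - d * (2 * sqrt 2 + 1)). lra.
    replace ((1 - d) * (1 - 3 * d) * (2 * (1 + d * (2 * sqrt 2 - 3)) ^ 2 / K) * (1 - d * (2 * sqrt 2 + 1)))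
      with (2 * ((1 - 3 * d) * (1 + d * (2 * sqrt 2 - 3)) ^ 2)) by (unfold K; field; lra).
    lra. }
  assert (D2 : (2 * d + (1 - d) * (sqrt 2 / 2)) * (4 * sqrt (1 + d)) + 2 * sqrt (1 + d) * (1 - 3 * d) <= (1 - d) * (1 - 3 * d) * d_d).
  { unfold d_d. apply Rmult_le_reg_r with (1 - d * (2 * sqrt 2 + 1)). lra.
    replace ((1 - d) * (1 - 3 * d) * (2 * (3 + d * (2 * sqrt 2 - 3)) * sqrt (1 + d) / K) * (1 - d * (2 * sqrt 2 + 1)))
      with (sqrt (1 + d) * (2 * (3 + d * (2 * sqrt 2 - 3)) * (1 - 3 * d))) by (unfold K; field; lra).
    replace (((2 * d + (1 - d) * (sqrt 2 / 2)) * (4 * sqrt (1 + d)) + 2 * sqrt (1 + d) * (1 - 3 * d)) * (1 - d * (2 * sqrt 2 + 1)))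
      with (sqrt (1 + d) * ((4 * (2 * d + (1 - d) * (sqrt 2 / 2)) + 2 * (1 - 3 * d)) * (1 - d * (2 * sqrt 2 + 1)))) by ring.
    apply Rmult_le_compat_l; auto. }
  assert (H3d : 0 < 1 - 3 * d) by lra.
  assert (Hlam : 0 <= 2 * d + (1 - d) * (sqrt 2 / 2)) by nra.
  split.
  - apply (glb_pass _ _ c_d W (d_d * sqrt s * eta) Hsig Hcd).
    intros r0 [z [Hz ->]]. specialize (L1b z Hz).
    set (Ez := w21norm N B blk w (vsub x z)) in *.
    assert (HEz : 0 <= Ez) by (apply w21_nonneg; auto).
    apply Rmult_le_reg_l with (1 - 3 * d); auto.
    assert (Q1 : 2 * (1 + d) * Ez <= c_d * (1 - 3 * d) * Ez) by (apply Rmult_le_compat_r; auto).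
    assert (Q2 : 4 * sqrt (1 + d) * (sqrt s * eta) <= d_d * (1 - 3 * d) * (sqrt s * eta)).
    { apply Rmult_le_compat_r; auto. apply Rmult_le_pos; lra. }
    nra.
  - replace (c_d / sqrt s * sigma_s N B blk w s x + d_d * eta) with ((c_d / sqrt s) * sigma_s N B blk w s x + d_d * eta) by ring.
    apply (glb_pass _ _ (c_d / sqrt s) (norm2 N v) (d_d * eta) Hsig).
    { apply Rdiv_lt_0_compat; auto. }
    intros r0 [z [Hz ->]]. specialize (L1b z Hz).
    set (Ez := w21norm N B blk w (vsub x z)) in *.
    assert (HEz : 0 <= Ez) by (apply w21_nonneg; auto).
    assert (HP : 0 < (1 - d) * (1 - 3 * d) * sqrt s) by (apply Rmult_lt_0_compat; [apply Rmult_lt_0_compat|]; lra).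
    apply Rmult_le_reg_l with ((1 - d) * (1 - 3 * d) * sqrt s); auto.
    replace ((1 - d) * (1 - 3 * d) * sqrt s * (c_d / sqrt s * Ez + d_d * eta))
      with ((1 - d) * (1 - 3 * d) * c_d * Ez + (1 - d) * (1 - 3 * d) * d_d * (sqrt s * eta)) by (field; lra).
    set (lam := 2 * d + (1 - d) * (sqrt 2 / 2)) in *.
    assert (S1 : (1 - 3 * d) * ((1 - d) * sqrt s * norm2 N v) <= (1 - 3 * d) * (lam * W + 2 * sqrt (1 + d) * sqrt s * eta))
      by (apply Rmult_le_compat_l; lra).
    assert (S2 : lam * ((1 - 3 * d) * W) <= lam * (2 * (1 + d) * Ez + 4 * sqrt (1 + d) * sqrt s * eta))
      by (apply Rmult_le_compat_l; lra).
    assert (Q1 : lam * (2 * (1 + d)) * Ez <= (1 - d) * (1 - 3 * d) * c_d * Ez) by (apply Rmult_le_compat_r; auto).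
    assert (Q2 : (lam * (4 * sqrt (1 + d)) + 2 * sqrt (1 + d) * (1 - 3 * d)) * (sqrt s * eta) <= (1 - d) * (1 - 3 * d) * d_d * (sqrt s * eta)).
    { apply Rmult_le_compat_r; auto. apply Rmult_le_pos; lra. }
    nra.
Qed.
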